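(* Let $V$ be a real vector space of dimension $m\ge3$ with a positive definite inner product, and let $R\neq0$ be a Jacobi-Tsankov algebraic curvature tensor on $V$. Suppose that $r(x)=m-1$ for some $x\in S(V)$. Then: \begin{enumerate} \item $J(\cdot)$ has maximal rank $m-1$ on an open dense subset of $V$; \item $R$ has constant sectional curvature $c\neq0$, i.e. $R=cR_0$ with $c\ne 0$. \end{enumerate}
   Context: An algebraic curvature tensor is $R\in\otimes^4V^*$ satisfying $R(x,y,z,w)=R(z,w,x,y)=-R(y,x,z,w)$ and $R(x,y,z,w)+R(y,z,x,w)+R(z,x,y,w)=0$. The curvature operator $\mathcal{R}(x,y)$ is defined by $\langle\mathcal{R}(x,y)z,w\rangle=R(x,y,z,w)$; the Jacobi operator is $J(x):y\mapsto\mathcal{R}(y,x)x$, and $r(x)=\operatorname{Rank}J(x)$. $S(V)$ is the unit sphere of $V$. $R$ is Jacobi-Tsankov if $x\perp y$ implies $J(x)J(y)=J(y)J(x)$. $R_0$ is the tensor with curvature operator $R_0(x,y)z=\langle y,z\rangle x-\langle x,z\rangle y$. *)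

(* Defs.v *)
From HB Require Import structures.
From mathcomp Require Import all_boot all_order all_algebra.
From mathcomp Require Import all_classical all_reals all_analysis.
Set Implicit Arguments. Unset Strict Implicit. Unset Printing Implicit Defensive.
Import Order.TTheory GRing.Theory Num.Theory.
Local Open Scope ring_scope.

(* V = 'rV[R]_m (coordinates w.r.t. a fixed basis), with a positive
   definite inner product given by a symmetric positive definite Gram
   matrix G: <x, y> = x G y^T. *)
Definition ip (R : realType) (m : nat) (G : 'M[R]_m) (x y : 'rV[R]_m) : R :=
  (x *m G *m y^T) 0 0.

Definition pos_def_ip (R : realType) (m : nat) (G : 'M[R]_m) : Prop :=
  G^T = G /\ forall x : 'rV[R]_m, x != 0 -> 0 < ip G x x.

Definition tens (R : realType) (m : nat) (T : 'I_m -> 'I_m -> 'I_m -> 'I_m -> R)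
  (x y z w : 'rV[R]_m) : R :=
  \sum_(i < m) \sum_(j < m) \sum_(k < m) \sum_(l < m)
    x 0 i * y 0 j * z 0 k * w 0 l * T i j k l.

Definition is_act (R : realType) (m : nat) (T : 'I_m -> 'I_m -> 'I_m -> 'I_m -> R) : Prop :=
  forall x y z w : 'rV[R]_m,
    [/\ tens T x y z w = tens T z w x y,
        tens T x y z w = - tens T y x z w &
        tens T x y z w + tens T y z x w + tens T z x y w = 0].

(* curvature operator: <Rop x y z, w> = tens T x y z w *)
Definition Rop (R : realType) (m : nat) (G : 'M[R]_m)
  (T : 'I_m -> 'I_m -> 'I_m -> 'I_m -> R) (x y z : 'rV[R]_m) : 'rV[R]_m :=
  (\row_(l < m) tens T x y z (delta_mx 0 l)) *m invmx G.

(* Jacobi operator J(x) : y |-> Rop y x x, as the matrix acting on row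
   vectors: y *m Jac x = Rop y x x. *)
Definition Jac (R : realType) (m : nat) (G : 'M[R]_m)
  (T : 'I_m -> 'I_m -> 'I_m -> 'I_m -> R) (x : 'rV[R]_m) : 'M[R]_m :=
  \matrix_(i < m) Rop G T (delta_mx 0 i) x x.

Definition jrank (R : realType) (m : nat) (G : 'M[R]_m)
  (T : 'I_m -> 'I_m -> 'I_m -> 'I_m -> R) (x : 'rV[R]_m) : nat :=
  \rank (Jac G T x).

Definition jacobi_tsankov (R : realType) (m : nat) (G : 'M[R]_m)
  (T : 'I_m -> 'I_m -> 'I_m -> 'I_m -> R) : Prop :=
  forall x y : 'rV[R]_m, ip G x y = 0 ->
    Jac G T x *m Jac G T y = Jac G T y *m Jac G T x.

Definition R0 (R : realType) (m : nat) (G : 'M[R]_m) (x y z w : 'rV[R]_m) : R :=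
  ip G y z * ip G x w - ip G x z * ip G y w.

(* Main.v *)
Set Warnings "-notation-overridden,-ambiguous-paths,-notation-incompatible-prefix".
Require Import Defs.
From HB Require Import structures.
From mathcomp Require Import all_boot all_order all_algebra.
From mathcomp Require Import all_classical all_reals all_analysis.
From mathcomp Require Import ring lra zify.
Set Implicit Arguments. Unset Strict Implicit. Unset Printing Implicit Defensive.
Import Order.TTheory GRing.Theory Num.Theory numFieldNormedType.Exports.
Local Open Scope classical_set_scope.
Local Open Scope ring_scope.
Section Basics.
Variables (R : realType) (m : nat) (G : 'M[R]_m)
  (T : 'I_m -> 'I_m -> 'I_m -> 'I_m -> R).
Implicit Types x y z w : 'rV[R]_m.

Lemma tensD1 x x' y z w : tens T (x + x') y z w = tens T x y z w + tens T x' y z w.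
Proof.
rewrite /tens -big_split; apply eq_bigr => i _; rewrite -big_split; apply eq_bigr => j _.
rewrite -big_split; apply eq_bigr => k _; rewrite -big_split; apply eq_bigr => l _.
by rewrite mxE !(mulrDl, mulrDr).
Qed.
Lemma tensD2 x y y' z w : tens T x (y + y') z w = tens T x y z w + tens T x y' z w.
Proof.
rewrite /tens -big_split; apply eq_bigr => i _; rewrite -big_split; apply eq_bigr => j _.
rewrite -big_split; apply eq_bigr => k _; rewrite -big_split; apply eq_bigr => l _.
by rewrite mxE !(mulrDl, mulrDr).
Qed.
Lemma tensD3 x y z z' w : tens T x y (z + z') w = tens T x y z w + tens T x y z' w.
Proof.
rewrite /tens -big_split; apply eq_bigr => i _; rewrite -big_split; apply eq_bigr => j _.
rewrite -big_split; apply eq_bigr => k _; rewrite -big_split; apply eq_bigr => l _.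
by rewrite mxE !(mulrDl, mulrDr).
Qed.
Lemma tensD4 x y z w w' : tens T x y z (w + w') = tens T x y z w + tens T x y z w'.
Proof.
rewrite /tens -big_split; apply eq_bigr => i _; rewrite -big_split; apply eq_bigr => j _.
rewrite -big_split; apply eq_bigr => k _; rewrite -big_split; apply eq_bigr => l _.
by rewrite mxE !(mulrDl, mulrDr).
Qed.
Lemma tensZ1 a x y z w : tens T (a *: x) y z w = a * tens T x y z w.
Proof.
rewrite /tens mulr_sumr; apply eq_bigr => i _; rewrite mulr_sumr; apply eq_bigr => j _.
rewrite mulr_sumr; apply eq_bigr => k _; rewrite mulr_sumr; apply eq_bigr => l _.
rewrite mxE; ring.
Qed.
Lemma tensZ2 a x y z w : tens T x (a *: y) z w = a * tens T x y z w.
Proof.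
rewrite /tens mulr_sumr; apply eq_bigr => i _; rewrite mulr_sumr; apply eq_bigr => j _.
rewrite mulr_sumr; apply eq_bigr => k _; rewrite mulr_sumr; apply eq_bigr => l _.
rewrite mxE; ring.
Qed.
Lemma tensZ3 a x y z w : tens T x y (a *: z) w = a * tens T x y z w.
Proof.
rewrite /tens mulr_sumr; apply eq_bigr => i _; rewrite mulr_sumr; apply eq_bigr => j _.
rewrite mulr_sumr; apply eq_bigr => k _; rewrite mulr_sumr; apply eq_bigr => l _.
rewrite mxE; ring.
Qed.
Lemma tensZ4 a x y z w : tens T x y z (a *: w) = a * tens T x y z w.
Proof.
rewrite /tens mulr_sumr; apply eq_bigr => i _; rewrite mulr_sumr; apply eq_bigr => j _.
rewrite mulr_sumr; apply eq_bigr => k _; rewrite mulr_sumr; apply eq_bigr => l _.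
rewrite mxE; ring.
Qed.

Lemma ipE x y : ip G x y = \sum_i \sum_j x 0 i * G i j * y 0 j.
Proof.
rewrite /ip !mxE exchange_big /=; apply eq_bigr => j _.
by rewrite !mxE mulr_suml.
Qed.
Lemma ipD1 x x' y : ip G (x + x') y = ip G x y + ip G x' y.
Proof.
rewrite !ipE -big_split; apply eq_bigr => i _; rewrite -big_split; apply eq_bigr => j _.
by rewrite mxE !(mulrDl, mulrDr).
Qed.
Lemma ipD2 x y y' : ip G x (y + y') = ip G x y + ip G x y'.
Proof.
rewrite !ipE -big_split; apply eq_bigr => i _; rewrite -big_split; apply eq_bigr => j _.
by rewrite mxE !(mulrDl, mulrDr).
Qed.
Lemma ipZ1 a x y : ip G (a *: x) y = a * ip G x y.
Proof.
rewrite !ipE mulr_sumr; apply eq_bigr => i _; rewrite mulr_sumr; apply eq_bigr => j _.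
rewrite mxE; ring.
Qed.
Lemma ipZ2 a x y : ip G x (a *: y) = a * ip G x y.
Proof.
rewrite !ipE mulr_sumr; apply eq_bigr => i _; rewrite mulr_sumr; apply eq_bigr => j _.
rewrite mxE; ring.
Qed.
Lemma ipC (HG : G^T = G) x y : ip G x y = ip G y x.
Proof.
rewrite !ipE exchange_big; apply eq_bigr => i _; apply eq_bigr => j _.
have -> : G j i = G i j by rewrite -[in LHS]HG mxE.
ring.
Qed.
Lemma tens01 y z w : tens T 0 y z w = 0.
Proof. by rewrite -(scale0r 0) tensZ1 mul0r. Qed.
Lemma tens02 x z w : tens T x 0 z w = 0.
Proof. by rewrite -(scale0r 0) tensZ2 mul0r. Qed.
Lemma tens03 x y w : tens T x y 0 w = 0.
Proof. by rewrite -(scale0r 0) tensZ3 mul0r. Qed.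
Lemma tens04 x y z : tens T x y z 0 = 0.
Proof. by rewrite -(scale0r 0) tensZ4 mul0r. Qed.
Lemma ip01 y : ip G 0 y = 0.
Proof. by rewrite -(scale0r 0) ipZ1 mul0r. Qed.
Lemma ip02 y : ip G y 0 = 0.
Proof. by rewrite -(scale0r 0) ipZ2 mul0r. Qed.
Lemma ipN1 x y : ip G (- x) y = - ip G x y.
Proof. by rewrite -scaleN1r ipZ1 mulN1r. Qed.
Lemma ipN2 x y : ip G x (- y) = - ip G x y.
Proof. by rewrite -scaleN1r ipZ2 mulN1r. Qed.
Lemma ipB1 x x' y : ip G (x - x') y = ip G x y - ip G x' y.
Proof. by rewrite ipD1 ipN1. Qed.
Lemma ipB2 x y y' : ip G x (y - y') = ip G x y - ip G x y'.
Proof. by rewrite ipD2 ipN2. Qed.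

Lemma tens_sum1 (F : 'I_m -> 'rV[R]_m) y z w :
  tens T (\sum_i F i) y z w = \sum_i tens T (F i) y z w.
Proof.
exact: (big_morph (fun u => tens T u y z w) (fun a b => tensD1 a b y z w) (tens01 y z w)).
Qed.
Lemma tens_sum4 (F : 'I_m -> 'rV[R]_m) x y z :
  tens T x y z (\sum_i F i) = \sum_i tens T x y z (F i).
Proof.
exact: (big_morph (fun u => tens T x y z u) (fun a b => tensD4 x y z a b) (tens04 x y z)).
Qed.

Definition Jv x y := y *m Jac G T x.

Lemma Jac_mul x : Jac G T x =
  (\matrix_(i, l) tens T (delta_mx 0 i) x x (delta_mx 0 l)) *m invmx G.
Proof.
apply/row_matrixP => i; rewrite row_mul rowK /Rop; congr (_ *m _).
by apply/rowP => l; rewrite !mxE.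
Qed.

Lemma ipJ (Gu : G \in unitmx) x y w : ip G (Jv x y) w = tens T y x x w.
Proof.
rewrite /ip /Jv Jac_mul !mulmxA -(mulmxA _ (invmx G)) mulVmx // mulmx1.
rewrite {2}(row_sum_delta y) {2}(row_sum_delta w) tens_sum1.
rewrite !mxE.
under eq_bigr => j _ do rewrite !mxE mulr_suml.
rewrite exchange_big; apply eq_bigr => i _.
rewrite tensZ1 tens_sum4 mulr_sumr; apply eq_bigr => j _.
rewrite tensZ4 !mxE; ring.
Qed.
End Basics.

Section Main.
Variables (R : realType) (m : nat) (G : 'M[R]_m)
  (T : 'I_m -> 'I_m -> 'I_m -> 'I_m -> R).
Hypothesis HG : pos_def_ip G.
Hypothesis HT : is_act T.
Hypothesis HJT : jacobi_tsankov G T.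
Implicit Types x y z w u v e a b : 'rV[R]_m.

Local Notation "<< x , y >>" := (ip G x y).
Local Notation t := (tens T).
Local Notation J := (Jv G T).

Lemma ipS x y : << x, y >> = << y, x >>.
Proof. by apply: ipC; case: HG. Qed.

Lemma ip_eq0 x : << x, x >> = 0 -> x = 0.
Proof.
move=> h; apply/eqP; case: HG => _ H; apply: contraLR isT => /H; by rewrite h ltxx.
Qed.

Lemma ip_ext u v : (forall w, << u, w >> = << v, w >>) -> u = v.
Proof.
move=> h; apply/eqP; rewrite -subr_eq0; apply/eqP; apply: ip_eq0.
by rewrite ipB1 h subrr.
Qed.

Lemma Gunit : G \in unitmx.
Proof.
rewrite -row_free_unit -kermx_eq0; apply/eqP/row_matrixP => i.
rewrite row0; apply: ip_eq0.
have /sub_kermxP h : (row i (kermx G) <= kermx G)%MS by exact: row_sub.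
by rewrite /ip h mul0mx mxE.
Qed.

Lemma ipJ' x y w : << J x y, w >> = t y x x w.
Proof. exact: (ipJ T Gunit). Qed.

Lemma t_pair x y z w : t x y z w = t z w x y.
Proof. by case: (HT x y z w). Qed.
Lemma t_a12 x y z w : t x y z w = - t y x z w.
Proof. by case: (HT x y z w). Qed.
Lemma t_bianchi x y z w : t x y z w + t y z x w + t z x y w = 0.
Proof. by case: (HT x y z w). Qed.
Lemma t_a34 x y z w : t x y z w = - t x y w z.
Proof. by rewrite t_pair t_a12 t_pair. Qed.
Lemma t_xx x z w : t x x z w = 0.
Proof. have h := t_a12 x x z w; lra. Qed.
Lemma t_zz x y z : t x y z z = 0.
Proof. by rewrite t_pair t_xx. Qed.
Lemma t_jsym u x v : t u x x v = t v x x u.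
Proof. by rewrite t_pair t_a12 t_a34 opprK. Qed.

Lemma tensN1 x y z w : t (- x) y z w = - t x y z w.
Proof. by rewrite -scaleN1r tensZ1 mulN1r. Qed.
Lemma tensN2 x y z w : t x (- y) z w = - t x y z w.
Proof. by rewrite -scaleN1r tensZ2 mulN1r. Qed.
Lemma tensN3 x y z w : t x y (- z) w = - t x y z w.
Proof. by rewrite -scaleN1r tensZ3 mulN1r. Qed.
Lemma tensN4 x y z w : t x y z (- w) = - t x y z w.
Proof. by rewrite -scaleN1r tensZ4 mulN1r. Qed.

Lemma Jsym x u v : << J x u, v >> = << J x v, u >>.
Proof. by rewrite !ipJ' t_jsym. Qed.
Lemma JD x u v : J x (u + v) = J x u + J x v.
Proof. by rewrite /Jv mulmxDl. Qed.
Lemma JZ x (k : R) u : J x (k *: u) = k *: J x u.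
Proof. by rewrite /Jv scalemxAl. Qed.
Lemma JB x u v : J x (u - v) = J x u - J x v.
Proof. by rewrite /Jv mulmxBl. Qed.
Lemma J0 x : J x 0 = 0.
Proof. by rewrite /Jv mul0mx. Qed.
Lemma Jxx x : J x x = 0.
Proof. by apply: ip_ext => w; rewrite ipJ' ip01 t_a12 t_xx oppr0. Qed.
Lemma J0x y : J 0 y = 0.
Proof. by apply: ip_ext => w; rewrite ipJ' ip01 tens02. Qed.

Lemma JTv x y v : << x, y >> = 0 -> J y (J x v) = J x (J y v).
Proof. by move=> /HJT h; rewrite /Jv -!mulmxA h. Qed.

Lemma kerJ_line e : (0 < m)%N -> << e, e >> = 1 -> \rank (Jac G T e) = m.-1 ->
  forall v, J e v = 0 -> v = << v, e >> *: e.
Proof.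
move=> Hm He Hr v Hv.
have e0 : e != 0.
  by apply/eqP => h; move: He; rewrite h ip01 => /eqP; rewrite eq_sym oner_eq0.
have eK : (e <= kermx (Jac G T e))%MS by apply/sub_kermxP; exact: Jxx.
have vK : (v <= kermx (Jac G T e))%MS by apply/sub_kermxP.
have rk : \rank (kermx (Jac G T e)) = 1%N by rewrite mxrank_ker Hr; lia.
have Ke : (kermx (Jac G T e) <= e)%MS.
  by case: (mxrank_leqif_sup eK) => _ <-; rewrite rk rank_rV e0.
have /sub_rVP [k ->] := submx_trans vK Ke.
by rewrite ipZ1 He mulr1.
Qed.

Lemma stepB e : << e, e >> = 1 -> (forall v, J e v = 0 -> v = << v, e >> *: e) ->
  forall y, << e, y >> = 0 -> J y e = t e y y e *: e.
Proof.
move=> He Hk y Hy.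
have h : J e (J y e) = 0 by rewrite -JTv // Jxx J0.
by rewrite {1}(Hk _ h) ipJ'.
Qed.

Lemma stepC e y : << e, e >> = << y, y >> ->
  << J y e, J y e >> = << J e y, J e y >>.
Proof.
move=> H.
have PQ : << e + y, e - y >> = 0.
  by rewrite ipD1 !ipB2 H (ipS y e); ring.
have := JTv e PQ; set a := J y e; set b := J e y => h.
have h1 : J (e + y) e = a - b.
  apply: ip_ext => w; rewrite ipJ' ipB1 !ipJ' !(tensD2, tensD3) ?t_zz ?t_xx ?(t_a12 e y e w) ?(t_a12 y e y w).
  ring.
have h2 : J (e - y) e = a + b.
  apply: ip_ext => w; rewrite ipJ' ipD1 !ipJ' !(tensD2, tensD3, tensN2, tensN3) ?t_zz ?t_xx ?(t_a12 e y e w) ?(t_a12 y e y w).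
  ring.
have h3 : J (e - y) y = a + b.
  apply: ip_ext => w; rewrite ipJ' ipD1 !ipJ' !(tensD2, tensD3, tensN2, tensN3) ?t_zz ?t_xx ?(t_a12 e y e w) ?(t_a12 y e y w).
  ring.
have h4 : J (e + y) y = b - a.
  apply: ip_ext => w; rewrite ipJ' ipB1 !ipJ' !(tensD2, tensD3) ?t_zz ?t_xx ?(t_a12 e y e w) ?(t_a12 y e y w).
  ring.
have := congr1 (fun u => << u, y >>) h => /=.
rewrite Jsym h3 h1 Jsym h4 h2 !(ipD1, ipD2, ipB1, ipB2, ipN1, ipN2) (ipS b a).
lra.
Qed.

Lemma ip_neq0 x : x != 0 -> << x, x >> != 0.
Proof. by move=> h; apply/eqP => /ip_eq0 /eqP; rewrite (negbTE h). Qed.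

Lemma stepD e : << e, e >> = 1 -> (forall v, J e v = 0 -> v = << v, e >> *: e) ->
  forall y, << e, y >> = 0 -> << y, y >> = 1 -> J e y = t e y y e *: y.
Proof.
move=> He Hk y Hy Hyy.
have ha := stepB He Hk Hy.
have hC := stepC (etrans He (esym Hyy)).
rewrite ha ipZ1 ipZ2 He in hC.
have hby : << J e y, y >> = t e y y e by rewrite ipJ' t_pair.
apply/eqP; rewrite -subr_eq0; apply/eqP; apply: ip_eq0.
rewrite !(ipB1, ipB2, ipZ1, ipZ2) hby (ipS y (J e y)) hby Hyy.
lra.
Qed.

Lemma stepD' e : << e, e >> = 1 -> (forall v, J e v = 0 -> v = << v, e >> *: e) ->
  forall y, << e, y >> = 0 -> exists s, J e y = s *: y.
Proof.
move=> He Hk y Hy.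
have [->|y0] := eqVneq y 0; first by exists 0; rewrite J0 scale0r.
have yp : 0 < << y, y >> by case: HG => _ /(_ y y0).
set k := Num.sqrt << y, y >>.
have kp : 0 < k by rewrite sqrtr_gt0.
have kk : k * k = << y, y >> by rewrite -expr2 sqr_sqrtr // ltW.
have k0 : k != 0 by rewrite gt_eqF.
set u := k^-1 *: y.
have Hu : << e, u >> = 0 by rewrite ipZ2 Hy mulr0.
have Huu : << u, u >> = 1.
  by rewrite ipZ1 ipZ2 -kk mulKf // mulVf.
have := stepD He Hk Hu Huu; set s := t _ _ _ _ => hs.
exists s.
have -> : y = k *: u by rewrite /u scalerA mulfV // scale1r.
by rewrite JZ hs !scalerA (mulrC k).
Qed.

Lemma eig_eq e u v p q : J e u = p *: u -> J e v = q *: v -> << u, v >> != 0 -> p = q.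
Proof.
move=> Hu Hv nz; have := Jsym e u v.
rewrite Hu Hv !ipZ1 (ipS v u); exact: (mulIf nz).
Qed.

Lemma stepE e : << e, e >> = 1 -> (forall v, J e v = 0 -> v = << v, e >> *: e) ->
  Jac G T e != 0 ->
  exists c, c != 0 /\ forall y, J e y = c *: (y - << y, e >> *: e).
Proof.
move=> He Hk Hnz.
have [i Hi] : exists i, row i (Jac G T e) != 0.
  case: (pickP (fun i => row i (Jac G T e) != 0)) => [i Hi|H]; first by exists i.
  exfalso; move/negP: Hnz; apply; apply/eqP/row_matrixP => i.
  by move/negbFE: (H i) => /eqP ->; rewrite row0.
rewrite rowE in Hi.
set w := delta_mx 0 i in Hi.
set y0 := w - << w, e >> *: e.
have Hy0 : << e, y0 >> = 0 by rewrite ipB2 ipZ2 (ipS e w) He; ring.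
have Jy0 : J e y0 = J e w by rewrite JB JZ Jxx scaler0 subr0.
have [c Hc] := stepD' He Hk Hy0.
have c0 : c != 0.
  by apply: contraNneq Hi => c0; rewrite -[_ *m _]/(J e w) -Jy0 Hc c0 scale0r.
have y00 : y0 != 0.
  by apply: contraNneq Hi => h0; rewrite -[_ *m _]/(J e w) -Jy0 h0 J0.
exists c; split => // y.
set z := y - << y, e >> *: e.
have Hz : << e, z >> = 0 by rewrite ipB2 ipZ2 (ipS e y) He; ring.
have -> : J e y = J e z by rewrite JB JZ Jxx scaler0 subr0.
have [s Hs] := stepD' He Hk Hz.
have [->|z0] := eqVneq z 0; first by rewrite J0 scaler0.
suff -> : c = s by [].
have [nz|] := boolP (<< y0, z >> != 0); first exact: eig_eq Hc Hs nz.
rewrite negbK => /eqP yz.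
have Hw : << e, y0 + z >> = 0 by rewrite ipD2 Hy0 Hz addr0.
have [s' Hs'] := stepD' He Hk Hw.
have -> : c = s'.
  by apply: eig_eq Hc Hs' _; rewrite ipD2 yz addr0 ip_neq0.
by apply: eig_eq Hs' Hs _; rewrite ipD1 yz add0r ip_neq0.
Qed.

Lemma tensB1 x x' y z w : t (x - x') y z w = t x y z w - t x' y z w.
Proof. by rewrite tensD1 tensN1. Qed.

Lemma main_step e c : << e, e >> = 1 -> c != 0 ->
  (forall y, J e y = c *: (y - << y, e >> *: e)) ->
  forall b, << e, b >> = 0 ->
  forall y w, t y b b w = c * (<< b, b >> * << y, w >> - << y, b >> * << b, w >>).
Proof.
move=> He c0 HJe b Hb.
have Hte : forall y w, t y e e w = c * (<< y, w >> - << y, e >> * << e, w >>).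
  by move=> y w; rewrite -ipJ' HJe ipZ1 ipB1 ipZ1.
have Hk : forall v, J e v = 0 -> v = << v, e >> *: e.
  by move=> v /eqP; rewrite HJe scaler_eq0 (negbTE c0) /= subr_eq0 => /eqP.
have HB : forall a, << e, a >> = 0 -> forall w, t e a a w = c * << a, a >> * << e, w >>.
  move=> a Ha w; rewrite -ipJ' (stepB He Hk Ha) ipZ1 t_pair Hte (ipS a e) Ha.
  by rewrite mul0r subr0.
have HF : forall a, << e, a >> = 0 -> << a, b >> = 0 ->
    forall w, t a b b w = c * << b, b >> * << a, w >>.
  move=> a Ha Hab w.
  have Hx : << e + a, b >> = 0 by rewrite ipD1 Hb Hab addr0.
  have h1 : J (e + a) e = (c * << a, a >>) *: e - c *: a.
    apply: ip_ext => w'; rewrite ipJ' ipB1 !ipZ1 !(tensD2, tensD3) !t_xx.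
    rewrite (t_a12 e a e w') Hte HB // (ipS a e) Ha; ring.
  have h2 : J b e = (c * << b, b >>) *: e.
    by rewrite (stepB He Hk Hb) t_pair (t_pair b e e b) -[t e b b e]/(t e b b e) HB // He mulr1.
  have := congr1 (fun u => << u, w >>) (JTv e Hx) => /=.
  rewrite h1 JB !JZ h2 JZ h1 !(ipB1, ipZ1) ipJ' => h.
  apply: (mulfI c0); lra.
move=> y w.
have [->|b0] := eqVneq b 0.
  by rewrite tens02 !(ip01, ip02); ring.
have bb0 : << b, b >> != 0 by exact: ip_neq0.
set y1 := y - << y, e >> *: e.
set z := << b, b >> *: y1 - << y1, b >> *: b.
have Hy1 : << e, y1 >> = 0 by rewrite ipB2 ipZ2 (ipS e y) He; ring.
have Hz : << e, z >> = 0 by rewrite ipB2 !ipZ2 Hy1 Hb; ring.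
have Hzb : << z, b >> = 0 by rewrite ipB1 !ipZ1; ring.
have := HF z Hz Hzb w.
rewrite /z /y1 !(tensB1, tensZ1) t_xx HB // !(ipB1, ipZ1) => h.
apply: (mulfI bb0); rewrite Hb in h; lra.
Qed.

Lemma nz_row n (A : 'M[R]_(n, m)) : A != 0 -> exists i, row i A != 0.
Proof.
move=> Hnz.
case: (pickP (fun i => row i A != 0)) => [i Hi|H]; first by exists i.
exfalso; move/negP: Hnz; apply; apply/eqP/row_matrixP => i.
by move/negbFE: (H i) => /eqP ->; rewrite row0.
Qed.

Lemma exists_perp x y : (2 < m)%N ->
  exists b, << b, b >> = 1 /\ << x, b >> = 0 /\ << y, b >> = 0.
Proof.
move=> Hm.
set M := row_mx (G *m x^T) (G *m y^T).
have : kermx M != 0.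
  apply/eqP => h; have := mxrank_ker M; rewrite h mxrank0.
  have := rank_leq_col M; lia.
move=> /nz_row [i]; set v := row i _ => v0.
have /sub_kermxP := row_sub i (kermx M); rewrite -/v mul_mx_row => /eqP.
rewrite row_mx_eq0 => /andP [/eqP h1 /eqP h2].
have vx : << v, x >> = 0 by rewrite /ip -mulmxA h1 mxE.
have vy : << v, y >> = 0 by rewrite /ip -mulmxA h2 mxE.
have yp : 0 < << v, v >> by case: HG => _ /(_ v v0).
set k := Num.sqrt << v, v >>.
have kp : 0 < k by rewrite sqrtr_gt0.
have kk : k * k = << v, v >> by rewrite -expr2 sqr_sqrtr // ltW.
have k0 : k != 0 by rewrite gt_eqF.
exists (k^-1 *: v); split; first by rewrite ipZ1 ipZ2 -kk mulKf // mulVf.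
by rewrite !ipZ2 (ipS x v) (ipS y v) vx vy mulr0.
Qed.

Lemma all_J e c : (2 < m)%N -> << e, e >> = 1 -> c != 0 ->
  (forall y, J e y = c *: (y - << y, e >> *: e)) ->
  forall x y w, t y x x w = c * (<< x, x >> * << y, w >> - << y, x >> * << x, w >>).
Proof.
move=> Hm He c0 HJe x.
have [b [Hbb [Heb Hxb]]] := exists_perp e x Hm.
have HJb : forall y, J b y = c *: (y - << y, b >> *: b).
  move=> y; apply: ip_ext => w.
  by rewrite ipJ' (main_step He c0 HJe Heb) ipZ1 ipB1 ipZ1 Hbb mul1r.
by apply: (main_step Hbb c0 HJb); rewrite ipS.
Qed.

Lemma polar c : (forall x y w, t y x x w = c * R0 G y x x w) ->
  forall x y z w, t x y z w = c * R0 G x y z w.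
Proof.
move=> H.
have h1 : forall a b d w, t a b d w - c * R0 G a b d w = - (t a d b w - c * R0 G a d b w).
  move=> a b d w.
  have := H (b + d) a w; rewrite !(tensD2, tensD3) H (H d a w) /R0.
  rewrite !(ipD1, ipD2) (ipS d b) (ipS a d) (ipS a b).
  lra.
move=> x y z w.
have b1 := h1 y z x w.
have b2 := h1 x z y w.
have a1 := t_a12 y x z w.
have a2 := t_a12 z x y w.
have bi := t_bianchi x y z w.
move: b1 b2 a1 a2 bi; rewrite /R0.
rewrite ?(ipS z y) ?(ipS z x) ?(ipS y x) ?(ipS w x) ?(ipS w y) ?(ipS w z).
lra.
Qed.

Lemma rank_J c : c != 0 ->
  (forall x y w, t y x x w = c * (<< x, x >> * << y, w >> - << y, x >> * << x, w >>)) ->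
  forall x, x != 0 -> \rank (Jac G T x) = m.-1.
Proof.
move=> c0 H x x0.
have xx0 : << x, x >> != 0 by exact: ip_neq0.
have Hk : forall v, J x v = 0 -> (v <= x)%MS.
  move=> v Hv; apply/sub_rVP; exists (<< v, x >> / << x, x >>).
  apply: ip_ext => w; rewrite ipZ1.
  have := congr1 (fun u => << u, w >>) Hv => /=; rewrite ipJ' H ip01 => /eqP.
  rewrite mulf_eq0 (negbTE c0) /= subr_eq0 => /eqP h.
  apply: (mulfI xx0); rewrite h; field; exact: xx0.
have Ke : (kermx (Jac G T x) <= x)%MS.
  apply/row_subP => i; apply: Hk; apply/sub_kermxP; exact: row_sub.
have xK : (x <= kermx (Jac G T x))%MS by apply/sub_kermxP; exact: Jxx.
have r1 := mxrankS Ke; have r2 := mxrankS xK.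
rewrite rank_rV x0 /= in r1 r2.
have := mxrank_ker (Jac G T x); have := rank_leq_row (Jac G T x); lia.
Qed.

End Main.

Lemma delta_nz (R : realType) m (i : 'I_m) : (delta_mx 0 i : 'rV[R]_m) != 0.
Proof.
apply/eqP => /matrixP /(_ 0 i); rewrite !mxE !eqxx /= => /eqP.
by rewrite oner_eq0.
Qed.

Lemma dense_nz (R : realType) m : (0 < m)%N -> dense (~` [set (0 : 'rV[R]_m)]).
Proof.
move=> Hm O [p Op] oO.
have [p0|p0] := eqVneq p 0; last by exists p; split => //= /eqP; rewrite (negbTE p0).
set u : 'rV[R]_m := delta_mx 0 (Ordinal Hm).
set f := fun r : R => r *: u.
have oF : open (f @^-1` O).
  by apply: open_comp => // r _; exact: scalel_continuous.
have f0 : (f @^-1` O) 0 by rewrite /f /= scale0r -p0.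
have [r [Or /= r0]] := dense_set1C (0 : R) (ex_intro _ 0 f0) oF.
exists (r *: u); split => //= /eqP; rewrite scaler_eq0 /u (negbTE (delta_nz _ _)) orbF => /eqP.
exact: r0.
Qed.

Unset Implicit Arguments.

Theorem lemma2p1 (R : realType) (m : nat) (G : 'M[R]_m)
  (T : 'I_m -> 'I_m -> 'I_m -> 'I_m -> R) :
  (3 <= m)%N ->
  pos_def_ip G ->
  is_act T ->
  (exists x y z w : 'rV[R]_m, tens T x y z w != 0) ->
  jacobi_tsankov G T ->
  (exists x : 'rV[R]_m, ip G x x = 1 /\ jrank G T x = m.-1) ->
  (exists U : set 'rV[R]_m,
      open U /\ dense U /\ forall x, U x -> jrank G T x = m.-1)
  /\
  (exists c : R, c != 0 /\
      forall x y z w : 'rV[R]_m, tens T x y z w = c * R0 G x y z w).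
Proof.
move=> Hm HG HT _ HJT [e [He Hr]].
have Hm0 : (0 < m)%N by lia.
have Hm2 : (2 < m)%N by lia.
have Hk := kerJ_line HG HT Hm0 He Hr.
have Hnz : Jac G T e != 0.
  apply/eqP => h; move: Hr; rewrite /jrank h mxrank0; lia.
have [c [c0 HJe]] := stepE HG HT HJT He Hk Hnz.
have HA := all_J HG HT HJT Hm2 He c0 HJe.
split.
  exists (~` [set 0]); split.
    apply: closed_openC; apply: accessible_closed_set1.
    exact: hausdorff_accessible (@norm_hausdorff _ _).
  split; first exact: dense_nz.
  move=> x /= x0; apply: (rank_J HG HT c0 HA).
  by apply/eqP.
exists c; split => //.
apply: (polar HG HT) => x y w; rewrite HA /R0; ring.
Qed.
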